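(* Fix integers $0\le k\le T$. Let $(\nu^k_l)_{k\le l\le T-1}$ be nonnegative numbers, let $n^k=(n^k_l)_{k\le l\le T}$ satisfy $n^k_k=0$ with independent Poisson increments $n^k_{l+1}-n^k_l$ of parameters $\nu^k_l$, independent of $\mathfrak{F}_k$, let $i^k_k\in\{-1,1\}$ be $\mathfrak{F}_k$-measurable, and let $i^k_l=-\mathbf{1}_{i^k_k=-1}+\mathbf{1}_{i^k_k=1}(\mathbf{1}_{n^k_l=0}-\mathbf{1}_{n^k_l\ge1})$ for $k\le l\le T$. Define $$q_k=\sup_{\theta}\mathbb{E}_k\Big[\sum_{\ell=k+1}^{T}\big(\mathbf{1}_{i^k_\ell=-1}-\mathbf{1}_{i^k_\ell=1}\big)\mathbf{1}_{\ell\le\theta}\Big],$$ the supremum being over stopping times $\theta$ with values in $\{k,\dots,T\}$ with respect to the filtration generated by $\mathfrak{F}_k$ and $(i^k_l)_{k\le l\le T}$. Then $q_k=q^k(k,i^k_k)$, where $q^k:\{k,\dots,T\}\times\{1,-1\}\to\mathbb{R}$ is given by $q^k(T,\pm1)=0$ and, for $k\le l<T$, $$q^k(l,-1)=T-l,$$ $$q^k(l,1)=\max\Big(0,\;e^{-\nu^k_l}\big(-1+q^k(l+1,1)\big)+\big(1-e^{-\nu^k_l}\big)\big(1+q^k(l+1,-1)\big)\Big).$$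
   Context: $\mathfrak{F}=(\mathfrak{F}_k)_{0\le k\le T}$ is a filtration on the underlying probability space and $\mathbb{E}_k$ is conditional expectation given $\mathfrak{F}_k$. $q_k$ is the value of the stylized callable range accrual (receiving $+1$ at each date $\ell$ with $i^k_\ell=-1$, paying $1$ at each date with $i^k_\ell=1$, callable at zero value) in the trader's model set up at time $k$. *)

(* Defs.v *)
From HB Require Import structures.
From mathcomp Require Import all_boot all_order all_algebra.
From mathcomp Require Import all_classical all_reals all_analysis.
Set Implicit Arguments. Unset Strict Implicit. Unset Printing Implicit Defensive.
Import Order.TTheory GRing.Theory Num.Theory.
Local Open Scope classical_set_scope.
Local Open Scope ring_scope.

Section Defs.
Context {R : realType} {d : measure_display} {Omega : measurableType d}.

(* Poisson probability mass function with parameter nu >= 0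
   (nu^m / m! * exp(-nu)); for nu = 0 it is the Dirac mass at 0.
   (The library's poisson_pmf is 1 everywhere at rate 0, hence not used.) *)
Definition pois (nu : R) (m : nat) : R := nu ^+ m / m`!%:R * expR (- nu).

Definition measurable_wrt (G : set (set Omega)) (f : Omega -> R) : Prop :=
  forall B : set R, measurable B -> G (f @^-1` B).

Definition sub_sigma (G : set (set Omega)) : Prop :=
  sigma_algebra setT G /\ (forall A, G A -> measurable A).

Definition is_cond_exp (P : probability Omega R) (G : set (set Omega))
  (X Y : Omega -> R) : Prop :=
  measurable_wrt G Y /\ P.-integrable setT (EFin \o Y) /\
  forall A, G A -> (\int[P]_(w in A) (Y w)%:E = \int[P]_(w in A) (X w)%:E)%E.

Definition regime (ik : Omega -> R) (n : nat -> Omega -> nat) (l : nat)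
  (w : Omega) : R :=
  - (ik w == -1)%:R + (ik w == 1)%:R * ((n l w == 0)%N%:R - (1 <= n l w)%N%:R).

Definition gen_filtration (Fk : set (set Omega)) (i : nat -> Omega -> R)
  (k l : nat) : set (set Omega) :=
  <<s Fk `|` [set A | exists m B, (k <= m <= l)%N /\ measurable B /\
                              A = i m @^-1` B] >>.

Definition stopping_time (G : nat -> set (set Omega)) (k Tm : nat)
  (theta : Omega -> nat) : Prop :=
  (forall w, (k <= theta w <= Tm)%N) /\
  (forall l, (k <= l <= Tm)%N -> G l [set w | theta w = l]).

Definition payoff (i : nat -> Omega -> R) (k Tm : nat) (theta : Omega -> nat)
  (w : Omega) : R :=
  \sum_(k.+1 <= l < Tm.+1)
     (((i l w == -1)%:R - (i l w == 1)%:R) * (l <= theta w)%N%:R).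

End Defs.

Section qfun.
Context {R : realType}.

Definition qminus (Tm l : nat) : R := (Tm - l)%N%:R.

(* qplus_aux m = q^k(Tm - m, 1) *)
Fixpoint qplus_aux (nu : nat -> R) (Tm m : nat) : R :=
  match m with
  | 0 => 0
  | m'.+1 =>
      let l := (Tm - m'.+1)%N in
      Num.max 0 (expR (- nu l) * (-1 + qplus_aux nu Tm m')
                 + (1 - expR (- nu l)) * (1 + qminus Tm l.+1))
  end.

Definition qplus (nu : nat -> R) (Tm l : nat) : R := qplus_aux nu Tm (Tm - l).

Definition qfun (nu : nat -> R) (Tm l : nat) (s : R) : R :=
  if s == 1 then qplus nu Tm l else qminus Tm l.

End qfun.

(* Main.v *)
Require Import Defs.
From HB Require Import structures.
From mathcomp Require Import all_boot all_order all_algebra.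
From mathcomp Require Import all_classical all_reals all_analysis.
From mathcomp Require Import ring lra measurable_realfun.
Import Order.TTheory GRing.Theory Num.Theory.
Local Open Scope classical_set_scope.
Local Open Scope ring_scope.

Section SA.
Variable T : Type.
Variable G : set (set T).
Hypothesis sa : sigma_algebra setT G.

Lemma sa0 : G set0. Proof. by case: sa. Qed.
Lemma saC A : G A -> G (~` A).
Proof. by case: sa => _ h _ /h; rewrite setTD. Qed.
Lemma saT : G setT.
Proof. by rewrite -setC0; apply: saC; exact: sa0. Qed.
Lemma saUn (A : (set T)^nat) : (forall j, G (A j)) -> G (\bigcup_j A j).
Proof. by case: sa => _ _; apply. Qed.
Lemma saU A B : G A -> G B -> G (A `|` B).
Proof.
move=> hA hB; rewrite -bigcup2E; apply: saUn => -[|[|j]] //=; exact: sa0.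
Qed.
Lemma saI A B : G A -> G B -> G (A `&` B).
Proof.
by move=> hA hB; rewrite -[A `&` B]setCK setCI; apply/saC/saU; apply: saC.
Qed.
Lemma saD A B : G A -> G B -> G (A `\` B).
Proof. by move=> hA hB; rewrite setDE; apply: saI => //; apply: saC. Qed.
End SA.
Arguments sa0 {T G}.
Arguments saC {T G} sa {A}.
Arguments saT {T G}.
Arguments saUn {T G} sa {A}.
Arguments saU {T G} sa {A B}.
Arguments saI {T G} sa {A B}.
Arguments saD {T G} sa {A B}.

Section Main.
Variables (R : realType) (d : measure_display) (Omega : measurableType d)
  (P : probability Omega R) (F : nat -> set (set Omega)) (k Tm : nat)
  (nu : nat -> R) (n : nat -> Omega -> nat) (ik : Omega -> R).
Hypothesis hF : forall j, sub_sigma (F j).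
Hypothesis hkT : (k <= Tm)%N.
Hypothesis hnu : forall l, (k <= l < Tm)%N -> 0 <= nu l.
Hypothesis hnm : forall l, measurable_fun setT (n l).
Hypothesis hn0 : forall w, n k w = 0%N.
Hypothesis hind : forall (A : set Omega) (m : nat -> nat), F k A ->
     P (A `&` [set w | forall l, (k <= l < Tm)%N -> n l.+1 w = (n l w + m l)%N])
     = (P A * (\prod_(k <= l < Tm) pois (nu l) (m l))%:E)%E.
Hypothesis hik : forall w, ik w = 1 \/ ik w = -1.
Hypothesis hikm : measurable_wrt (F k) ik.

Let i := regime ik n.
Let G := gen_filtration (F k) i k.

Lemma pois_ge0 (nu0 : R) m : 0 <= nu0 -> 0 <= pois nu0 m.
Proof. by move=> h; rewrite /pois mulr_ge0 ?expR_ge0 // divr_ge0 // exprn_ge0. Qed.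

Lemma pois_sum (nu0 : R) : 0 <= nu0 ->
  (\sum_(0 <= x <oo) (pois nu0 x)%:E = 1)%E.
Proof.
move=> hnu0.
rewrite [RHS](_ : _ = (expR (- nu0))%:E * (expR nu0)%:E)%E; last first.
  by rewrite -EFinM expRN mulVf ?gt_eqF ?expR_gt0.
under eq_eseriesr.
  move=> j _; rewrite /pois EFinM muleC; over.
rewrite /= nneseriesZl/=; last first.
  by move=> j _; rewrite lee_fin divr_ge0// exprn_ge0.
congr *%E; rewrite expRE -EFin_lim; last first.
  rewrite /pseries/=; under eq_fun do rewrite mulrC.
  exact: is_cvg_series_exp_coeff.
apply/congr_lim/funext => j/=; rewrite /pseries/= /series/= -sumEFin//.
by under eq_bigr do rewrite mulrC.
Qed.

Lemma m1n1 : ((-1 : R) == 1) = false.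
Proof. by apply/negbTE/eqP => h; lra. Qed.

Lemma iE l w : i l w = if ik w == 1 then (if n l w == 0%N then 1 else -1) else -1.
Proof.
rewrite /i /regime; case: (hik w) => ->; rewrite ?eqxx ?m1n1 ?(eq_sym 1) ?m1n1 /=.
  case: eqP => [->|/eqP h] /=; first by rewrite mul1r; lra.
  by rewrite lt0n h /= mul1r; lra.
by rewrite mul0r; lra.
Qed.

Lemma i1E l w : (i l w = 1) <-> (ik w = 1 /\ n l w = 0%N).
Proof.
have hm : (-1 : R) <> 1 by move/eqP; rewrite m1n1.
rewrite iE; case: eqP => [->|h]; last by split => [/hm|[]].
case: eqP => [->|h]; first by [].
by split => [/hm|[]].
Qed.

Lemma Fmeas {A} : F k A -> measurable A.
Proof. by case: (hF k) => _; apply. Qed.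

Lemma saF : sigma_algebra setT (F k).
Proof. by case: (hF k). Qed.

Lemma ikS (B : set R) : measurable B -> F k (ik @^-1` B).
Proof. by move=> mB; apply: hikm. Qed.

Lemma ik1F : F k [set w | ik w = 1].
Proof. by have := @ikS [set 1] (measurable_set1 _). Qed.

Lemma nS l (B : set nat) : measurable (n l @^-1` B).
Proof. by rewrite -[_ @^-1` _]setTI; apply: hnm. Qed.

Lemma i_pm l w : i l w = 1 \/ i l w = -1.
Proof. by rewrite iE; case: ifP => _; [case: ifP => _|]; auto. Qed.

Lemma i1meas l : measurable [set w | i l w = 1].
Proof.
rewrite (_ : [set w | i l w = 1] = [set w | ik w = 1] `&` n l @^-1` [set 0%N]).
  by apply: measurableI; [exact: Fmeas ik1F|exact: nS].
by apply/seteqP; split => w /= /i1E.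
Qed.

Lemma mconst (p : Prop) : measurable [set _ : Omega | p].
Proof.
case: (pselect p) => h.
  by rewrite (_ : [set _ | p] = setT) //; apply/seteqP; split.
by rewrite (_ : [set _ | p] = set0) //; apply/seteqP; split.
Qed.

Lemma iS l (B : set R) : measurable (i l @^-1` B).
Proof.
have -> : i l @^-1` B = ([set w | i l w = 1] `&` [set _ | B 1])
    `|` (~` [set w | i l w = 1] `&` [set _ | B (-1)]).
  apply/seteqP; split => w /=.
  - move=> Bw; case: (i_pm l w) => h. 
      by left; split => //; rewrite -h.
    right; split; last by rewrite -h.
    by rewrite /= h => /eqP; rewrite m1n1.
  - case=> -[h1 h2]; first by rewrite h1.
    by case: (i_pm l w) => h; rewrite h.
apply: measurableU; apply: measurableI; try exact: i1meas; try exact: mconst.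
by apply: measurableC; exact: i1meas.
Qed.

Lemma saG l : sigma_algebra setT (G l).
Proof. exact: smallest_sigma_algebra. Qed.

Lemma Gmeas l A : G l A -> measurable A.
Proof.
apply: smallest_sub => //.
- exact: sigma_algebra_measurable.
- move=> B [/Fmeas //|[m [C [_ [mC ->]]]]]; exact: iS.
Qed.

Lemma FG l A : F k A -> G l A.
Proof. by move=> h; apply: sub_gen_smallest; left. Qed.

Lemma iG l m B : (k <= m <= l)%N -> measurable B -> G l (i m @^-1` B).
Proof. by move=> h mB; apply: sub_gen_smallest; right; exists m, B. Qed.

Lemma Gmono j l : (j <= l)%N -> G j `<=` G l.
Proof.
move=> jl; apply: smallest_sub; first exact: saG.
move=> B [/FG //|[m [C [/andP[h1 h2] [mC ->]]]]]; apply: iG => //.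
by rewrite h1 (leq_trans h2 jl).
Qed.


Definition p (A : set Omega) : R := fine (P A).

Lemma PE {A} : measurable A -> P A = (p A)%:E.
Proof. by move=> mA; rewrite /p fineK // fin_num_measure. Qed.

Lemma p_ge0 A : 0 <= p A.
Proof. by rewrite /p fine_ge0. Qed.

Definition incr l x := [set w | n l.+1 w = (n l w + x)%N].

Lemma mincr l x : measurable (incr l x).
Proof.
have -> : incr l x = \bigcup_y (n l @^-1` [set y] `&` n l.+1 @^-1` [set (y + x)%N]).
  apply/seteqP; split => w /=; first by move=> h; exists (n l w) => //.
  by case=> y _ [h1 h2]; rewrite /incr /= h2 h1.
by apply: bigcupT_measurable => y; apply: measurableI; apply: nS.
Qed.

Definition Ev (C : pred nat) (m : nat -> nat) : set Omega :=
  [set w | forall l, (k <= l < Tm)%N -> C l -> n l.+1 w = (n l w + m l)%N].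

Definition Pm (C : pred nat) (m : nat -> nat) : R :=
  \prod_(k <= l < Tm | C l) pois (nu l) (m l).

Lemma mEv C m : measurable (Ev C m).
Proof.
have -> : Ev C m = \bigcap_l (if (k <= l < Tm)%N && C l then incr l (m l) else setT).
  apply/seteqP; split => w /=.
    by move=> h l _; case: ifP => // /andP[h1 h2]; apply: h.
  by move=> h l h1 h2; have := h l I; rewrite h1 h2.
by apply: bigcapT_measurable => l; case: ifP => _ //; exact: mincr.
Qed.

Lemma Pm_ge0 C m : 0 <= Pm C m.
Proof.
rewrite /Pm big_nat_cond; apply: prodr_ge0 => l /andP[h _]; apply: pois_ge0; exact: hnu.
Qed.

Lemma PmS C m l0 x : (k <= l0 < Tm)%N -> ~~ C l0 ->
  Pm (fun l => C l || (l == l0)) (fun l => if l == l0 then x else m l)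
  = pois (nu l0) x * Pm C m.
Proof.
move=> hl0 hC; rewrite /Pm !big_mkcond !(bigD1_seq l0) ?mem_index_iota ?iota_uniq //=.
rewrite [in RHS]big_mkcond [in RHS](bigD1_seq l0) ?mem_index_iota ?iota_uniq //=.
rewrite eqxx orbT (negbTE hC) mul1r; congr (_ * _); apply: eq_bigr => l /negbTE h.
by rewrite h orbF.
Qed.


Lemma LB (s : seq nat) : forall C m A,
  (forall l, (k <= l < Tm)%N -> ~~ C l -> l \in s) -> F k A ->
  (P A * (Pm C m)%:E <= P (A `&` Ev C m))%E.
Proof.
elim: s => [|l0 s IH] C m A hs hA.
  have hC : forall l, (k <= l < Tm)%N -> C l.
    by move=> l hl; apply: contraT => /(hs l hl).
  have -> : Ev C m = [set w | forall l, (k <= l < Tm)%N -> n l.+1 w = (n l w + m l)%N].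
    apply/seteqP; split => w /= h l hl; first by apply: h => //; exact: hC.
    by move=> _; apply: h.
  rewrite hind //.
  have -> : Pm C m = \prod_(k <= l < Tm) pois (nu l) (m l).
    rewrite /Pm big_nat_cond [RHS]big_nat_cond; apply: eq_bigl => l.
    by case hl: (k <= l < Tm)%N => //=; rewrite hC ?hl.
  by [].
case: (boolP ((k <= l0 < Tm)%N && ~~ C l0)) => [/andP[hl0 hC]|hno]; last first.
  apply: IH => // l hl hCl; move: (hs l hl hCl); rewrite inE => /orP[/eqP el|//].
  by move: hno; rewrite -el hl hCl.
pose C' := fun l => C l || (l == l0).
pose mx x := fun l => if l == l0 then x else m l.
have hs' : forall l, (k <= l < Tm)%N -> ~~ C' l -> l \in s.
  move=> l hl; rewrite /C' negb_or => /andP[h1 h2]; move: (hs l hl h1).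
  by rewrite inE (negbTE h2).
pose Fx x := A `&` Ev C' (mx x).
have mFx x : measurable (Fx x) by apply: measurableI; [exact: Fmeas|exact: mEv].
have tF : trivIset setT Fx.
  move=> x y _ _ [w [[_ h1] [_ h2]]].
  have e1 := h1 l0 hl0; have e2 := h2 l0 hl0.
  rewrite /C' /mx eqxx orbT in e1 e2.
  by move: (e1 isT) (e2 isT) => -> /eqP; rewrite eqn_add2l => /eqP.
have sub : \bigcup_x Fx x `<=` A `&` Ev C m.
  move=> w [x _ [hA' hE]]; split => // l hl hCl.
  have := hE l hl; rewrite /C' hCl /mx; case: eqP => [el|_]; last by apply.
  by move: hC; rewrite -el hCl.
have mU : measurable (\bigcup_x Fx x) by exact: bigcupT_measurable.
have hle : (P (\bigcup_x Fx x) <= P (A `&` Ev C m))%E.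
  apply: le_measure sub; rewrite inE //.
  by apply: measurableI; [exact: Fmeas|exact: mEv].
have hU : P (\bigcup_x Fx x) = (\sum_(0 <= x <oo) P (Fx x))%E.
  exact: (@measure_semi_bigcup _ _ _ P Fx mFx tF mU).
apply: le_trans hle.
rewrite hU (PE (Fmeas hA)) -EFinM.
have -> : (p A * Pm C m)%:E = (\sum_(0 <= x <oo) ((p A * Pm C m)%:E * (pois (nu l0) x)%:E))%E.
  rewrite nneseriesZl; first by rewrite pois_sum ?mule1 //; exact: hnu.
  by move=> x _; rewrite lee_fin pois_ge0 //; exact: hnu.
apply: lee_nneseries.
  move=> x _ _; rewrite -EFinM lee_fin mulr_ge0 ?mulr_ge0 ?p_ge0 ?Pm_ge0 //.
  by rewrite exprn_ge0 //; exact: hnu.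
move=> x _; have := IH C' (mx x) A hs' hA.
rewrite PmS // (PE (Fmeas hA)) -!EFinM.
by rewrite (mulrC (pois _ _)) mulrA.
Qed.


Definition Nd j := [set w | (n j.+1 w < n j w)%N].

Lemma mNd j : measurable (Nd j).
Proof.
have -> : Nd j = \bigcup_y (n j @^-1` [set y] `&` n j.+1 @^-1` [set z | (z < y)%N]).
  apply/seteqP; split => w /=; first by move=> h; exists (n j w) => //.
  by case=> y _ [h1 h2]; rewrite /Nd /= h1.
by apply: bigcupT_measurable => y; apply: measurableI; apply: nS.
Qed.

Lemma Pm_pred1 j x : (k <= j < Tm)%N ->
  Pm (fun l => false || (l == j)) (fun l => if l == j then x else 0%N) = pois (nu j) x.
Proof.
move=> hj; rewrite PmS // /Pm big_pred0 ?mulr1 //.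
Qed.

Lemma Nd0 j : (k <= j < Tm)%N -> P (Nd j) = 0%E.
Proof.
move=> hj.
pose C := fun l => false || (l == j).
pose mx x := fun l => if l == j then x else 0%N.
pose Fx x := setT `&` Ev C (mx x).
have mFx x : measurable (Fx x) by apply: measurableI => //; exact: mEv.
have tF : trivIset setT Fx.
  move=> x y _ _ [w [[_ h1] [_ h2]]].
  have e1 := h1 j hj; have e2 := h2 j hj.
  rewrite /C /mx eqxx /= in e1 e2.
  by move: (e1 isT) (e2 isT) => -> /eqP; rewrite eqn_add2l => /eqP.
have mU : measurable (\bigcup_x Fx x) by exact: bigcupT_measurable.
have hU : P (\bigcup_x Fx x) = (\sum_(0 <= x <oo) P (Fx x))%E.
  exact: (@measure_semi_bigcup _ _ _ P Fx mFx tF mU).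
have hge : (1 <= P (\bigcup_x Fx x))%E.
  rewrite hU -(pois_sum (nu j) (hnu j hj)); apply: lee_nneseries.
    by move=> x _ _; rewrite lee_fin; apply: pois_ge0; exact: hnu.
  move=> x _; have := @LB (index_iota k Tm) C (mx x) setT.
  rewrite Pm_pred1 // probability_setT mul1e; apply => //.
    by move=> l hl _; rewrite mem_index_iota.
  exact: saT saF.
have hdis : Nd j `&` \bigcup_x Fx x = set0.
  apply/seteqP; split => w // [hw [x _ [_ h]]].
  have := h j hj; rewrite /C /mx eqxx /= => /(_ isT) e.
  by move: hw; rewrite /Nd /= e ltnNge leq_addr.
have h := probability_le1 P (measurableU _ _ (mNd j) mU).
rewrite measureU // ?mNd // in h.
have : (P (Nd j) + P (\bigcup_x Fx x) <= 1)%E := h.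
rewrite (PE (mNd j)) (PE mU).
move: hge; rewrite (PE mU) !lee_fin => h1 h2.
have h0 := p_ge0 (Nd j).
have -> : p (Nd j) = 0 by lra.
  by []. exact: mNd.
Qed.

Lemma Nnull : exists N, [/\ measurable N, P N = 0%E &
  forall w, ~ N w -> forall j, (k <= j < Tm)%N -> (n j w <= n j.+1 w)%N].
Proof.
have : P.-negligible (\bigcup_j (if (k <= j < Tm)%N then Nd j else set0)).
  apply: negligible_bigcup => j; case: ifP => hj.
    by exists (Nd j); split => //; [exact: mNd|exact: Nd0].
  by exists set0; split => //; rewrite measure0.
case=> N [mN PN sN]; exists N; split => // w hw j hj.
rewrite leqNgt; apply/negP => h; apply: hw; apply: sN; exists j => //.
by rewrite hj.
Qed.


Lemma EQ (s : seq nat) : forall C m A,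
  (forall l, (k <= l < Tm)%N -> ~~ C l -> l \in s) -> F k A ->
  P (A `&` Ev C m) = (P A * (Pm C m)%:E)%E.
Proof.
elim: s => [|l0 s IH] C m A hs hA.
  have hC : forall l, (k <= l < Tm)%N -> C l.
    by move=> l hl; apply: contraT => /(hs l hl).
  have -> : Ev C m = [set w | forall l, (k <= l < Tm)%N -> n l.+1 w = (n l w + m l)%N].
    apply/seteqP; split => w /= h l hl; first by apply: h => //; exact: hC.
    by move=> _; apply: h.
  rewrite hind //.
  have -> : Pm C m = \prod_(k <= l < Tm) pois (nu l) (m l).
    rewrite /Pm big_nat_cond [RHS]big_nat_cond; apply: eq_bigl => l.
    by case hl: (k <= l < Tm)%N => //=; rewrite hC ?hl.
  by [].
case: (boolP ((k <= l0 < Tm)%N && ~~ C l0)) => [/andP[hl0 hC]|hno]; last first.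
  apply: IH => // l hl hCl; move: (hs l hl hCl); rewrite inE => /orP[/eqP el|//].
  by move: hno; rewrite -el hl hCl.
pose C' := fun l => C l || (l == l0).
pose mx x := fun l => if l == l0 then x else m l.
have hs' : forall l, (k <= l < Tm)%N -> ~~ C' l -> l \in s.
  move=> l hl; rewrite /C' negb_or => /andP[h1 h2]; move: (hs l hl h1).
  by rewrite inE (negbTE h2).
pose Fx x := A `&` Ev C' (mx x).
have mFx x : measurable (Fx x) by apply: measurableI; [exact: Fmeas|exact: mEv].
have tF : trivIset setT Fx.
  move=> x y _ _ [w [[_ h1] [_ h2]]].
  have e1 := h1 l0 hl0; have e2 := h2 l0 hl0.
  rewrite /C' /mx eqxx orbT in e1 e2.
  by move: (e1 isT) (e2 isT) => -> /eqP; rewrite eqn_add2l => /eqP.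
have mU : measurable (\bigcup_x Fx x) by exact: bigcupT_measurable.
have mAE : measurable (A `&` Ev C m) by apply: measurableI; [exact: Fmeas|exact: mEv].
have mN' : measurable (A `&` Ev C m `&` Nd l0) by apply: measurableI => //; exact: mNd.
have PN' : P (A `&` Ev C m `&` Nd l0) = 0%E.
  exact: (subset_measure0 mN' (mNd l0) (fun w h => h.2) (Nd0 l0 hl0)).
have eqU : A `&` Ev C m = \bigcup_x Fx x `|` (A `&` Ev C m `&` Nd l0).
  apply/seteqP; split => w.
    move=> [hA' hE]; case: (ltnP (n l0.+1 w) (n l0 w)) => hlt; first by right.
    left; exists (n l0.+1 w - n l0 w)%N => //; split => // l hl.
    rewrite /C' /mx; case: eqP => [->|_]; first by rewrite subnKC.
    by rewrite orbF; apply: hE.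
  case=> [[x _ [hA' hE]]|[] //]; split => // l hl hCl.
  have := hE l hl; rewrite /C' hCl /mx; case: eqP => [el|_]; last by apply.
  by move: hC; rewrite -el hCl.
have hU : P (\bigcup_x Fx x) = (\sum_(0 <= x <oo) P (Fx x))%E.
  exact: (@measure_semi_bigcup _ _ _ P Fx mFx tF mU).
have h1 : P (A `&` Ev C m) = P (\bigcup_x Fx x).
  rewrite {1}eqU; exact: measureU0.
rewrite h1 hU (PE (Fmeas hA)) -EFinM.
have -> : (p A * Pm C m)%:E = (\sum_(0 <= x <oo) ((p A * Pm C m)%:E * (pois (nu l0) x)%:E))%E.
  rewrite nneseriesZl; first by rewrite pois_sum ?mule1 //; exact: hnu.
  by move=> x _; rewrite lee_fin pois_ge0 //; exact: hnu.
apply: eq_eseriesr => x _; rewrite (IH C' (mx x) A hs' hA).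
rewrite PmS // (PE (Fmeas hA)) -!EFinM.
by rewrite (mulrC (pois _ _)) mulrA.
Qed.


Definition W l := [set w | forall m, (k <= m <= l)%N -> i m w = 1].
Definition Ip l := [set w | i l w = 1].
Definition Ik1 := [set w | ik w = 1].

Lemma W_Ev l : (k <= l <= Tm)%N ->
  W l = Ik1 `&` Ev (fun j => (j < l)%N) (fun _ => 0%N).
Proof.
move=> /andP[kl lT]; apply/seteqP; split => w /=.
  move=> h; split; first by have := h k; rewrite leqnn kl => /(_ isT) /i1E [].
  move=> j /andP[kj jT] jl; rewrite addn0.
  have := h j; rewrite kj ltnW // => /(_ isT) /i1E [_ ->].
  by have := h j.+1; rewrite jl (leq_trans kj) // => /(_ isT) /i1E [_ ->].
move=> [h1 h2].
have H : forall dd, (k + dd <= l)%N -> n (k + dd) w = 0%N.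
  elim=> [|dd IH] hd; first by rewrite addn0 hn0.
  have hd' : (k + dd < l)%N by rewrite -addnS.
  rewrite addnS h2; first by rewrite addn0 IH // ltnW.
    by rewrite leq_addr /= (leq_trans hd').
  exact: hd'.
move=> m /andP[km ml]; apply/i1E; split => //.
by rewrite -(subnKC km) H // subnKC.
Qed.

Definition Ep l := \prod_(k <= j < l) expR (- nu j).

Lemma PW A l : F k A -> (k <= l <= Tm)%N ->
  P (A `&` W l) = (P (A `&` Ik1) * (Ep l)%:E)%E.
Proof.
move=> hA hl; rewrite W_Ev // setIA (EQ (index_iota k Tm)) //.
- congr (_ * _)%E; congr EFin.
  rewrite /Pm /Ep (big_nat_widen k l Tm _ _ (proj2 (andP hl))).
  apply: eq_big => // j _.
  by rewrite /pois expr0 fact0 div1r invr1 mul1r.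
- by move=> j hj _; rewrite mem_index_iota.
- by apply: saI; [exact: saF|exact: hA|exact: ik1F].
Qed.

Lemma Nn_ex : { N : set Omega | [/\ measurable N, P N = 0%E &
  forall w, ~ N w -> forall j, (k <= j < Tm)%N -> (n j w <= n j.+1 w)%N] }.
Proof. exact: cid Nnull. Qed.

Definition Nn := proj1_sig Nn_ex.
Lemma mNn : measurable Nn. Proof. by case: (proj2_sig Nn_ex). Qed.
Lemma PNn : P Nn = 0%E. Proof. by case: (proj2_sig Nn_ex). Qed.
Lemma monoNn w : ~ Nn w -> forall j, (k <= j < Tm)%N -> (n j w <= n j.+1 w)%N.
Proof. by case: (proj2_sig Nn_ex) => _ _; apply. Qed.

Lemma mono w a b : ~ Nn w -> (k <= a <= b)%N -> (b <= Tm)%N -> (n a w <= n b w)%N.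
Proof.
move=> hw /andP[ka ab] bT; elim: b ab bT => [|b IH] ab bT.
  by move: ab; rewrite leqn0 => /eqP ->.
move: ab; rewrite leq_eqVlt => /orP[/eqP ->//|ab].
apply: leq_trans (IH ab (ltnW bT)) _; apply: monoNn => //.
by rewrite (leq_trans ka ab).
Qed.

Lemma asW l w : (k <= l <= Tm)%N -> ~ Nn w -> i l w = 1 -> W l w.
Proof.
move=> /andP[kl lT] hw /i1E [h1 h2] m /andP[km ml]; apply/i1E; split => //.
have := @mono w m l hw; rewrite km ml => /(_ isT lT).
by rewrite h2 leqn0 => /eqP.
Qed.

Lemma pnull A B : measurable A -> measurable B -> A `<=` B -> B `\` A `<=` Nn ->
  P A = P B.
Proof.
move=> mA mB AB BA.
have -> : B = A `|` (B `\` A).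
  apply/seteqP; split => w.
    by move=> hB; case: (pselect (A w)) => h; [left|right].
  by case=> [/AB|[]].
rewrite measureU0 //; first exact: measurableD.
exact: (subset_measure0 (measurableD mB mA) mNn BA PNn).
Qed.

Lemma pIpW X l : measurable X -> (k <= l <= Tm)%N -> P (X `&` Ip l) = P (X `&` W l).
Proof.
move=> mX hl; symmetry; apply: pnull.
- by apply: measurableI => //; rewrite (W_Ev _ hl); apply: measurableI; [exact: Fmeas ik1F|exact: mEv].
- by apply: measurableI => //; exact: i1meas.
- by move=> w [hX hW]; split => //; apply: hW; case/andP: hl => -> _ /=.
- move=> w [[hX hI] hnot]; case: (pselect (Nn w)) => // hN; exfalso; apply: hnot; split => //; exact: asW.
Qed.

Lemma STR l S : G l S -> exists A, F k A /\ S `&` W l = A `&` W l.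
Proof.
move: S; apply: smallest_sub.
- split.
  + by exists set0; split; [exact: sa0 saF|rewrite !set0I].
  + move=> B [A [hA e]]; exists (setT `\` A); split; first exact: (saD saF (saT saF) hA).
    apply/seteqP; split => w [[_ h1] h2]; split => //; split => // h3.
      by apply: h1; have : (A `&` W l) w by []; rewrite -e => -[].
    by apply: h1; have : (B `&` W l) w by []; rewrite e => -[].
  + move=> B hB; have [f hf] := choice hB.
    exists (\bigcup_j f j); split; first by apply: (saUn saF) => j; case: (hf j).
    apply/seteqP; split => w [[j _ h1] h2]; split => //; exists j => //.
      by have : (B j `&` W l) w by []; rewrite (proj2 (hf j)) => -[].
    by have : (f j `&` W l) w by []; rewrite -(proj2 (hf j)) => -[].
- move=> B [hB|[m [C [hm [mC ->]]]]]; first by exists B.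
  case: (pselect (C 1)) => hC.
    exists setT; split; first exact: saT saF.
    by apply/seteqP; split => w [h1 h2]; split => //; rewrite /= (h2 m hm).
  exists set0; split; first exact: sa0 saF.
  by apply/seteqP; split => w [h1 h2] //; move: h1; rewrite /= (h2 m hm).
Qed.

Lemma EpS l : (k <= l)%N -> Ep l.+1 = Ep l * expR (- nu l).
Proof. by move=> kl; rewrite /Ep big_nat_recr. Qed.

Lemma KEY l S : (k <= l < Tm)%N -> G l S ->
  p (S `&` Ip l.+1) = expR (- nu l) * p (S `&` Ip l).
Proof.
move=> /andP[kl lT] hS; have [A [hA e]] := STR _ _ hS.
have mS := Gmeas _ _ hS.
have h1 : (k <= l.+1 <= Tm)%N by rewrite lT (leq_trans kl).
have h0 : (k <= l <= Tm)%N by rewrite kl ltnW.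
rewrite /p (pIpW _ _ mS h1) (pIpW _ _ mS h0).
have -> : S `&` W l.+1 = A `&` W l.+1.
  have sub : W l.+1 `<=` W l by move=> w h m /andP[km ml]; apply: h; rewrite km leqW.
  by rewrite -(setIidr sub) !setIA e.
rewrite e !PW // (PE (measurableI _ _ (Fmeas hA) (Fmeas ik1F))) -!EFinM /= EpS //; ring.
Qed.

Definition c l := qplus nu Tm l.
Definition qm l : R := qminus Tm l.
Definition cont l := expR (- nu l) * (-1 + c l.+1) + (1 - expR (- nu l)) * (1 + qm l.+1).

Lemma c_rec l : (l < Tm)%N -> c l = Num.max 0 (cont l).
Proof.
move=> lT; rewrite /c /qplus -(subnSK lT) /= subnSK // subKn //; exact: ltnW.
Qed.

Lemma c_Tm : c Tm = 0.
Proof. by rewrite /c /qplus subnn. Qed.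

Lemma qm_Tm : qm Tm = 0.
Proof. by rewrite /qm /qminus subnn. Qed.

Lemma c_ge0 l : 0 <= c l.
Proof.
case: (ltnP l Tm) => h; first by rewrite c_rec // le_max lexx.
by rewrite /c /qplus (eqP h).
Qed.

Lemma qm_ge0 l : 0 <= qm l.
Proof. by rewrite /qm /qminus ler0n. Qed.

Lemma qmS l : (l < Tm)%N -> qm l = qm l.+1 + 1.
Proof. by move=> lT; rewrite /qm /qminus -(subnSK lT) -addn1 natrD. Qed.

Lemma cont_le l : (l < Tm)%N -> cont l <= c l.
Proof. by move=> lT; rewrite c_rec // le_max lexx orbT. Qed.

Lemma cont_eq l : (l < Tm)%N -> c l != 0 -> c l = cont l.
Proof.
move=> lT; rewrite c_rec //; case: (leP 0 (cont l)) => h.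
  by [].
by rewrite eqxx.
Qed.

Definition u l S := c l * p (S `&` Ip l) + qm l * p (S `\` Ip l).
Definition rp l S := p (S `\` Ip l.+1) - p (S `&` Ip l.+1).

Lemma pDI {S X} : measurable S -> measurable X -> p S = p (S `&` X) + p (S `\` X).
Proof.
move=> mS mX; have : P S = (P (S `\` X) + P (S `&` X))%E := measureDI P mS mX.
rewrite (PE mS) (PE (measurableI _ _ mS mX)) (PE (measurableD mS mX)) -EFinD.
by move=> [->]; rewrite addrC.
Qed.

Lemma p_le A B : measurable A -> measurable B -> A `<=` B -> p A <= p B.
Proof.
move=> mA mB AB; have : (P A <= P B)%E := le_measure P (mem_set mA) (mem_set mB) AB.
by rewrite (PE mA) (PE mB) lee_fin.
Qed.

Lemma p_null A : measurable A -> A `<=` Nn -> p A = 0.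
Proof.
move=> mA sA; have : P A = 0%E := subset_measure0 mA mNn sA PNn.
by rewrite /p => ->.
Qed.

Lemma u_ge0 l S : 0 <= u l S.
Proof. by rewrite /u addr_ge0 // mulr_ge0 ?c_ge0 ?qm_ge0 ?p_ge0. Qed.

Lemma u_Tm S : u Tm S = 0.
Proof. by rewrite /u c_Tm qm_Tm !mul0r addr0. Qed.

Lemma u_mono l S1 S2 : measurable S1 -> measurable S2 -> S1 `<=` S2 -> u l S1 <= u l S2.
Proof.
move=> m1 m2 s12; have mI := i1meas l.
rewrite /u lerD // ler_wpM2l ?c_ge0 ?qm_ge0 //; apply: p_le.
- exact: measurableI. - exact: measurableI.
- by move=> w [h1 h2]; split => //; apply: s12.
- exact: measurableD. - exact: measurableD.
- by move=> w [h1 h2]; split => //; apply: s12.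
Qed.

Lemma DP l S : (k <= l < Tm)%N -> G l S ->
  rp l S + u l.+1 S = qm l * p (S `\` Ip l) + cont l * p (S `&` Ip l).
Proof.
move=> hl hS; have mS := Gmeas _ _ hS; case/andP: (hl) => kl lT.
have e1 := KEY _ _ hl hS.
have e2 : p S = p (S `&` Ip l) + p (S `\` Ip l) := pDI mS (i1meas l).
have e3 : p S = p (S `&` Ip l.+1) + p (S `\` Ip l.+1) := pDI mS (i1meas l.+1).
rewrite /rp /u /cont (qmS _ lT).
have -> : p (S `\` Ip l.+1) = p S - p (S `&` Ip l.+1).
  by rewrite e3; ring.
rewrite e1 e2; ring.
Qed.

Lemma DP_le l S : (k <= l < Tm)%N -> G l S -> rp l S + u l.+1 S <= u l S.
Proof.
move=> hl hS; rewrite DP // /u addrC lerD2r ler_wpM2r ?p_ge0 //.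
by apply: cont_le; case/andP: hl.
Qed.

Lemma DP_eq l S : (k <= l < Tm)%N -> G l S ->
  c l != 0 \/ p (S `&` Ip l) = 0 -> rp l S + u l.+1 S = u l S.
Proof.
move=> hl hS [h|h]; rewrite DP // /u addrC.
  by rewrite -cont_eq //; case/andP: hl.
by rewrite h !mulr0.
Qed.

Lemma tele_le (a U : nat -> R) (j T0 : nat) :
  (forall l, (j <= l < T0)%N -> a l + U l.+1 <= U l) -> 0 <= U T0 -> (j <= T0)%N ->
  \sum_(j <= l < T0) a l <= U j.
Proof.
move=> h hT; move: {2}(T0 - j)%N (erefl (T0 - j)%N) => dd.
elim: dd j h => [|dd IH] j h e jT.
  have -> : j = T0 by apply/eqP; rewrite eqn_leq jT -subn_eq0 e.
  by rewrite big_geq.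
have jT' : (j < T0)%N by rewrite -subn_gt0 e.
rewrite big_ltn //; apply: le_trans (h j _); last by rewrite leqnn.
rewrite lerD2l; apply: IH => //.
- by move=> l /andP[jl lT]; apply: h; rewrite lT ltnW.
- by rewrite subnS e.
Qed.

Lemma tele_eq (a U : nat -> R) (j T0 : nat) :
  (forall l, (j <= l < T0)%N -> a l + U l.+1 = U l) -> U T0 = 0 -> (j <= T0)%N ->
  \sum_(j <= l < T0) a l = U j.
Proof.
move=> h hT; move: {2}(T0 - j)%N (erefl (T0 - j)%N) => dd.
elim: dd j h => [|dd IH] j h e jT.
  have -> : j = T0 by apply/eqP; rewrite eqn_leq jT -subn_eq0 e.
  by rewrite big_geq.
have jT' : (j < T0)%N by rewrite -subn_gt0 e.
rewrite big_ltn // -(h j); last by rewrite leqnn.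
congr (_ + _); apply: IH => //.
- by move=> l /andP[jl lT]; apply: h; rewrite lT ltnW.
- by rewrite subnS e.
Qed.

Lemma ind1 (A : set Omega) x : A x -> \1_A x = 1 :> R.
Proof. by move=> h; rewrite indicE mem_set. Qed.
Lemma ind0 (A : set Omega) x : ~ A x -> \1_A x = 0 :> R.
Proof. by move=> h; rewrite indicE memNset. Qed.

Lemma int_ind D X : measurable D -> measurable X ->
  P.-integrable D (fun w => (\1_X w)%:E).
Proof.
move=> mD mX; apply: (integrableS measurableT mD (@subsetT _ _)).
exact: integrable_indic.
Qed.

Lemma integrable_two D X (a b : R) : measurable D -> measurable X ->
  P.-integrable D (fun w => (a * \1_X w + b * \1_(~` X) w)%:E).
Proof.
move=> mD mX.
have -> : (fun w => (a * \1_X w + b * \1_(~` X) w)%:E) =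
   ((fun w => a%:E * (\1_X w)%:E) \+ (fun w => b%:E * (\1_(~` X) w)%:E))%E.
  by apply/funext => w /=; rewrite EFinD !EFinM.
apply: integrableD => //; apply: integrableZl => //; apply: int_ind => //.
exact: measurableC.
Qed.

Lemma int_two D X (a b : R) : measurable D -> measurable X ->
  (\int[P]_(w in D) ((a * \1_X w + b * \1_(~` X) w)%:E) =
  (a * p (X `&` D) + b * p (~` X `&` D))%:E)%E.
Proof.
move=> mD mX.
under eq_integral => w _ do rewrite EFinD !EFinM.
have mC : measurable (~` X) by exact: measurableC.
rewrite integralD //; last 2 first.
- by apply: integrableZl => //; exact: int_ind.
- by apply: integrableZl => //; exact: int_ind.
rewrite !integralZl //; try exact: int_ind.
rewrite !integral_indic //.
have e : ((a * p (X `&` D) + b * p (~` X `&` D))%:E =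
   a%:E * P (X `&` D) + b%:E * P (~` X `&` D))%E.
  by rewrite (PE (measurableI _ _ mX mD)) (PE (measurableI _ _ mC mD)) -!EFinM -EFinD.
exact: (esym e).
Qed.

Lemma Ipk w : Ip k w <-> ik w = 1.
Proof. by rewrite /Ip /= i1E hn0; split => [[]|]. Qed.

Lemma QE w : qfun nu Tm k (ik w) = c k * \1_(Ip k) w + qm k * \1_(~` Ip k) w.
Proof.
rewrite /qfun; case: (hik w) => h.
  rewrite h eqxx ind1 ?ind0 ?mulr1 ?mulr0 ?addr0 //; first by move/(_ (proj2 (Ipk w) h)).
  exact/Ipk.
rewrite h m1n1 ind0 ?ind1 ?mulr1 ?mulr0 ?add0r //.
  by move=> /Ipk; rewrite h => /eqP; rewrite m1n1.
by move=> /Ipk; rewrite h => /eqP; rewrite m1n1.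
Qed.

Lemma int_Q D : measurable D ->
  (\int[P]_(w in D) (qfun nu Tm k (ik w))%:E = (u k D)%:E)%E.
Proof.
move=> mD; under eq_integral => w _ do rewrite QE.
rewrite int_two //; last exact: i1meas.
by rewrite /u setIC setDE [~` _ `&` _]setIC.
Qed.

Lemma integrable_Q : P.-integrable setT (EFin \o (fun w => qfun nu Tm k (ik w))).
Proof.
have -> : EFin \o (fun w => qfun nu Tm k (ik w)) =
  (fun w => (c k * \1_(Ip k) w + qm k * \1_(~` Ip k) w)%:E).
  by apply/funext => w /=; rewrite QE.
apply: integrable_two => //; exact: i1meas.
Qed.

Definition TT (th : Omega -> nat) A l := A `&` [set w | (l < th w)%N].

Lemma TG th A l : stopping_time G k Tm th -> F k A -> (k <= l <= Tm)%N -> G l (TT th A l).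
Proof.
move=> [hb hs] hA /andP[kl lT]; apply: (saI (saG l)); first exact: FG.
have -> : [set w | (l < th w)%N] =
   ~` \bigcup_j (if (k <= j <= l)%N then [set w | th w = j] else set0).
  apply/seteqP; split => w /=.
    move=> h [j _]; case: ifP => // /andP[_ jl] e.
    by move: h; rewrite e ltnNge jl.
  move=> h; rewrite ltnNge; apply/negP => hle; apply: h; exists (th w) => //.
  by have /andP[-> _] := hb w; rewrite hle.
apply: (saC (saG l)); apply: (saUn (saG l)) => j; case: ifP => [/andP[kj jl]|_].
  by apply: (Gmono _ _ jl); apply: hs; rewrite kj (leq_trans jl).
exact: (sa0 (saG l)).
Qed.

Lemma mlt th l : stopping_time G k Tm th -> measurable [set w | (l < th w)%N].
Proof.
move=> hth; case: (ltnP l k) => lk.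
  rewrite (_ : [set w | _] = setT) //; apply/seteqP; split => w // _ /=.
  by case: hth => hb _; have /andP[h _] := hb w; exact: leq_trans lk h.
case: (leqP l Tm) => lT.
  have := TG th setT l hth (saT saF); rewrite lk lT => /(_ isT) /(Gmeas _ _).
  by rewrite /TT setTI.
rewrite (_ : [set w | _] = set0) //; apply/seteqP; split => w //= h.
by case: hth => hb _; have /andP[_ h2] := hb w; move: (leq_ltn_trans h2 lT); rewrite ltnNge (ltnW h).
Qed.

Definition Xs th l := [set w | (l < th w)%N /\ ~ Ip l.+1 w].
Definition Ys th l := [set w | (l < th w)%N /\ Ip l.+1 w].

Lemma payoffE th w : payoff i k Tm th w = \sum_(k <= l < Tm) (\1_(Xs th l) w - \1_(Ys th l) w).
Proof.
rewrite /payoff big_add1 /=; apply: eq_bigr => l _.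
have hne : ~ (-1 = 1 :> R) by move/eqP; rewrite m1n1.
case: (ltnP l (th w)) => hl; case: (i_pm l.+1 w) => h.
- rewrite h eqxx eq_sym m1n1 ind0 ?ind1 //=; first by rewrite mulr1 sub0r.
  by case.
- rewrite h eqxx m1n1 ind1 ?ind0 //=; first by rewrite mulr1 subr0.
  by case=> _; rewrite /Ip /= h.
  by split => //; rewrite /Ip /= h.
- by rewrite h ind0 ?ind0 ?mulr0 ?subr0 //; case=> /=; rewrite ltnNge hl.
- by rewrite h ind0 ?ind0 ?mulr0 ?subr0 //; case=> /=; rewrite ltnNge hl.
Qed.

Lemma int_payoff th A : stopping_time G k Tm th -> F k A ->
  (\int[P]_(w in A) (payoff i k Tm th w)%:E =
   (\sum_(k <= l < Tm) rp l (TT th A l))%:E)%E.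
Proof.
move=> hth hA; have mA := Fmeas hA.
have mX l : measurable (Xs th l).
  have -> : Xs th l = [set w | (l < th w)%N] `&` ~` Ip l.+1 by [].
  by apply: measurableI; [exact: mlt|apply: measurableC; exact: i1meas].
have mY l : measurable (Ys th l).
  have -> : Ys th l = [set w | (l < th w)%N] `&` Ip l.+1 by [].
  by apply: measurableI; [exact: mlt|exact: i1meas].
under eq_integral => w _ do rewrite payoffE -sumEFin.
rewrite integral_sum //; last first.
  move=> l; under eq_fun do rewrite EFinB.
  by apply: integrableB => //; exact: int_ind.
rewrite -sumEFin; apply: eq_bigr => l _.
rewrite integralB_EFin //; try exact: int_ind.
rewrite !integral_indic //.
have e : ((rp l (TT th A l))%:E = P (Xs th l `&` A) - P (Ys th l `&` A))%E.
  rewrite (PE (measurableI _ _ (mX l) mA)) (PE (measurableI _ _ (mY l) mA)) -EFinB /rp.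
  congr EFin; congr (p _ - p _); apply/seteqP; split => w /=; by [case=> [[]]|case=> [[]]].
exact: (esym e).
Qed.

Definition ls := (k + find (fun j => c (k + j) == 0%R) (iota 0 (Tm - k)))%N.

Lemma ls_ge : (k <= ls)%N.
Proof. exact: leq_addr. Qed.

Lemma ls_le : (ls <= Tm)%N.
Proof.
rewrite /ls -{2}(subnKC hkT) leq_add2l.
by apply: leq_trans (find_size _ _) _; rewrite size_iota.
Qed.

Lemma ls_lt l : (k <= l < ls)%N -> c l != 0.
Proof.
move=> /andP[kl lls].
have hj : (l - k < find (fun j => c (k + j) == 0%R) (iota 0 (Tm - k)))%N.
  by rewrite ltn_subLR.
have := before_find 0%N hj; rewrite nth_iota ?add0n ?subnKC //; first by move/negbT.
by apply: leq_trans hj _; apply: leq_trans (find_size _ _) _; rewrite size_iota.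
Qed.

Lemma ls_c : (ls < Tm)%N -> c ls = 0.
Proof.
move=> h.
have hf : (find (fun j => c (k + j) == 0%R) (iota 0 (Tm - k)) < size (iota 0 (Tm - k)))%N.
  by rewrite size_iota ltn_subRL.
have hh : has (fun j => c (k + j) == 0%R) (iota 0 (Tm - k)) by rewrite has_find.
have := nth_find 0%N hh; rewrite nth_iota ?add0n; first by move/eqP.
by move: hf; rewrite size_iota.
Qed.

Definition ths w := if (ls < Tm)%N && (i ls w == 1) then ls else Tm.

Lemma saconst (H : set (set Omega)) (q : Prop) : sigma_algebra setT H -> H [set _ | q].
Proof.
move=> sa; case: (pselect q) => h.
  by rewrite (_ : [set _ | q] = setT); [exact: saT|apply/seteqP; split].
by rewrite (_ : [set _ | q] = set0); [exact: sa0|apply/seteqP; split].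
Qed.

Lemma stop_s : stopping_time G k Tm ths.
Proof.
split.
  move=> w; rewrite /ths; case: ifP => [/andP[h _]|_]; first by rewrite ls_ge ltnW.
  by rewrite hkT leqnn.
move=> l /andP[kl lT].
pose Bs := [set w | (ls < Tm)%N && (i ls w == 1)].
have -> : [set w | ths w = l] = (Bs `&` [set _ | ls = l]) `|` (~` Bs `&` [set _ | Tm = l]).
  apply/seteqP; split => w; rewrite /ths /Bs /=.
    by case: ifP => h e; [left|right]; split => //; rewrite h.
  by case=> -[h e]; [move: h => /= ->|move: h => /negP/negbTE ->].
case: (leqP ls l) => lsl.
  have hB : G l Bs.
    case: (ltnP ls Tm) => h.
      rewrite (_ : Bs = i ls @^-1` [set 1]); first by apply: iG; [rewrite ls_ge|exact: measurable_set1].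
      by apply/seteqP; split => w; rewrite /Bs /= h /= => /eqP.
    rewrite (_ : Bs = set0); first exact: (sa0 (saG l)).
    by apply/seteqP; split => w //; rewrite /Bs /= ltnNge h.
  apply: (saU (saG l)).
    by apply: (saI (saG l)) => //; exact: (saconst _ _ (saG l)).
  apply: (saI (saG l)); first exact: (saC (saG l)).
  exact: (saconst _ _ (saG l)).
rewrite (_ : _ `|` _ = set0); first exact: (sa0 (saG l)).
apply/seteqP; split => w // [[_ /= e]|[_ /= e]]; move: lsl; rewrite -e ltnNge ?leqnn //.
by rewrite ls_le.
Qed.

Lemma TTs1 A l : (l < ls)%N -> TT ths A l = A.
Proof.
move=> h; apply/seteqP; split => w; first by case.
move=> hA; split => //=; rewrite /ths; case: ifP => // _.
exact: leq_trans h ls_le.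
Qed.

Lemma TTs2 A l : (ls <= l < Tm)%N -> TT ths A l = A `\` Ip ls.
Proof.
move=> /andP[h1 h2]; have hls : (ls < Tm)%N by exact: leq_ltn_trans h1 h2.
apply/seteqP; split => w [hA h]; split => //=.
  move: h; rewrite /ths hls /=; case: ifP => [/eqP e|/negbT hne _].
    by rewrite ltnNge h1.
  by rewrite /Ip /= => e; move: hne; rewrite e eqxx.
rewrite /ths hls /=; case: ifP => // /eqP e; exfalso; exact: h.
Qed.

Lemma u_ls A : (ls < Tm)%N -> u ls A = u ls (A `\` Ip ls).
Proof.
move=> h; rewrite /u ls_c // !mul0r !add0r; congr (_ * p _).
by apply/seteqP; split => w; [move=> [h1 h2]; split|move=> [[]]].
Qed.

Lemma mTT th A l : stopping_time G k Tm th -> F k A -> measurable (TT th A l).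
Proof.
move=> hth hA; apply: measurableI; [exact: Fmeas|exact: mlt].
Qed.

Lemma part_le th A : stopping_time G k Tm th -> F k A ->
  (\int[P]_(w in A) (payoff i k Tm th w)%:E <=
   \int[P]_(w in A) (qfun nu Tm k (ik w))%:E)%E.
Proof.
move=> hth hA; have mA := Fmeas hA.
rewrite int_payoff // int_Q // lee_fin.
apply: le_trans (_ : u k (TT th A k) <= u k A).
  apply: (@tele_le (fun l => rp l (TT th A l)) (fun l => u l (TT th A l)) k Tm) => //; last exact: u_ge0.
  move=> l /andP[kl lT].
  apply: le_trans (DP_le _ _ _ (TG _ _ _ hth hA _)); last 2 first.
  - by rewrite kl.
  - by rewrite kl ltnW.
  rewrite lerD2l; apply: u_mono; try exact: mTT.
  by move=> w [h1 h2]; split => //; exact: ltnW.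
by apply: u_mono => //; [exact: mTT|move=> w []].
Qed.

Lemma part_eq A : F k A ->
  (\int[P]_(w in A) (qfun nu Tm k (ik w))%:E =
   \int[P]_(w in A) (payoff i k Tm ths w)%:E)%E.
Proof.
move=> hA; have mA := Fmeas hA.
rewrite int_payoff ?int_Q //; last exact: stop_s.
congr EFin.
have hUk : u k (TT ths A k) = u k A.
  case: (ltnP k ls) => h; first by rewrite TTs1.
  have e : ls = k by apply/eqP; rewrite eqn_leq h ls_ge.
  case: (ltnP ls Tm) => h2.
    by rewrite TTs2; [rewrite -e (u_ls A h2)|rewrite e leqnn -e h2].
  have eT : k = Tm by apply/eqP; rewrite eqn_leq hkT -e.
  by rewrite eT !u_Tm.
rewrite -hUk; symmetry.
apply: (@tele_eq (fun l => rp l (TT ths A l)) (fun l => u l (TT ths A l)) k Tm) => //; last exact: u_Tm.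
move=> l /andP[kl lT].
have hs : u l.+1 (TT ths A l.+1) = u l.+1 (TT ths A l).
  case: (ltnP l.+1 Tm) => h1; last first.
    have -> : l.+1 = Tm by apply/eqP; rewrite eqn_leq lT h1.
    by rewrite !u_Tm.
  case: (ltngtP l.+1 ls) => h2.
  - by rewrite !TTs1 // ltnW.
  - have e1 : (ls <= l.+1 < Tm)%N by rewrite h1 ltnW.
    have e2 : (ls <= l < Tm)%N by rewrite -ltnS h2 lT.
    by rewrite (TTs2 _ _ e1) (TTs2 _ _ e2).
  - have e1 : (ls <= l.+1 < Tm)%N by rewrite h2 leqnn -h2 h1.
    rewrite (TTs2 _ _ e1) (TTs1 A l); last by rewrite -h2.
    rewrite h2 -(u_ls A) //; by rewrite -h2.
rewrite hs; apply: DP_eq; [by rewrite kl|apply: TG; [exact: stop_s|exact: hA|by rewrite kl ltnW]|].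
case: (ltnP l ls) => h; first by left; apply: ls_lt; rewrite kl h.
right; rewrite TTs2 ?h //; apply: p_null.
  by apply: measurableI; [apply: measurableD; [exact: Fmeas|exact: i1meas]|exact: i1meas].
move=> w [[_ hnot] hI]; case: (pselect (Nn w)) => // hN; exfalso; apply: hnot.
have := asW l w; rewrite kl ltnW // => /(_ isT hN hI).
by apply; rewrite ls_ge h.
Qed.

Lemma part1 : measurable_wrt (F k) (fun w => qfun nu Tm k (ik w)).
Proof.
move=> B mB.
have -> : (fun w => qfun nu Tm k (ik w)) @^-1` B =
   (Ik1 `&` [set _ | B (c k)]) `|` (~` Ik1 `&` [set _ | B (qm k)]).
  apply/seteqP; split => w /=; rewrite /qfun.
    move=> hB; case: (hik w) => h.
      by left; split => //; move: hB; rewrite h eqxx.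
    right; split; last by move: hB; rewrite h m1n1.
    by rewrite /Ik1 /= h => /eqP; rewrite m1n1.
  by case=> -[h1 h2]; [rewrite /Ik1 /= in h1; rewrite h1 eqxx|case: ifP => // /eqP].
apply: (saU saF); apply: (saI saF).
- exact: ik1F.
- exact: (saconst _ _ saF).
- exact: (saC saF ik1F).
- exact: (saconst _ _ saF).
Qed.

Lemma meas_wrt_fun (Y : Omega -> R) : measurable_wrt (F k) Y -> measurable_fun setT Y.
Proof. by move=> hY _ B mB; rewrite setTI; apply: Fmeas; apply: hY. Qed.

Lemma part2 th Y : stopping_time G k Tm th -> is_cond_exp P (F k) (payoff i k Tm th) Y ->
  {ae P, forall w, Y w <= qfun nu Tm k (ik w)}.
Proof.
move=> hth [hYm [hYi hYint]].
pose Q := fun w => qfun nu Tm k (ik w).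
pose D := [set w | Q w < Y w].
have hYc x : F k [set w | x < Y w].
  have := hYm _ (measurable_itv `]x, +oo[); congr (F k _).
  by apply/seteqP; split => w /=; rewrite in_itv /= andbT.
have hD : F k D.
  have -> : D = (Ik1 `&` [set w | c k < Y w]) `|` (~` Ik1 `&` [set w | qm k < Y w]).
    apply/seteqP; split => w; rewrite /D /Q /qfun /=.
      move=> hB; case: (hik w) => h.
        by left; split => //; move: hB; rewrite h eqxx.
      right; split; last by move: hB; rewrite h m1n1.
      by rewrite /Ik1 /= h => /eqP; rewrite m1n1.
    case=> -[h1 h2]; first by rewrite /Ik1 /= in h1; rewrite h1 eqxx.
    by case: ifP => // /eqP.
  apply: (saU saF); apply: (saI saF) => //.
  - exact: ik1F.
  - exact: (saC saF ik1F).
have mD := Fmeas hD.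
have hle : (\int[P]_(w in D) (Y w)%:E <= \int[P]_(w in D) (Q w)%:E)%E.
  by rewrite hYint //; exact: part_le.
have mY := meas_wrt_fun _ hYm.
have mQ := meas_wrt_fun _ part1.
have iY : P.-integrable D (EFin \o Y) by apply: integrableS hYi.
have iQ : P.-integrable D (EFin \o Q) by apply: integrableS integrable_Q.
pose g := fun w => Y w - Q w.
have mf : measurable_fun D (EFin \o g).
  apply/measurable_realfun.measurable_EFinP.
  by apply: measurable_funB; [apply: measurable_funS mY|apply: measurable_funS mQ].
have h0 : (\int[P]_(w in D) `|(EFin \o g) w| = 0)%E.
  apply/eqP; rewrite eq_le; apply/andP; split; last exact: integral_ge0.
  rewrite (eq_integral (fun w => (Y w)%:E - (Q w)%:E))%E; last first.
    move=> w /[!inE] hw; rewrite gee0_abs /g /= ?EFinB // lee_fin subr_ge0; exact: ltW.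
  rewrite integralB_EFin // sube_le0 //.
have [N [mN PN sN]] := (ae_eq_integral_abs P mD mf).1 h0.
exists N; split => // w /= hw; apply: sN => /= /(_ _) h.
have hDw : D w by rewrite /D /= ltNge; apply/negP.
by move: (h hDw) => /eqP; rewrite /g /= eqe subr_eq0 => /eqP e; move: hDw; rewrite /D /= e ltxx.
Qed.

Lemma part3 Z : measurable_wrt (F k) Z ->
  (forall th Y, stopping_time G k Tm th ->
     is_cond_exp P (F k) (payoff i k Tm th) Y -> {ae P, forall w, Y w <= Z w}) ->
  {ae P, forall w, qfun nu Tm k (ik w) <= Z w}.
Proof.
move=> _ hZ; apply: (hZ ths) => //; first exact: stop_s.
split; first exact: part1.
split; first exact: integrable_Q.
by move=> A hA; exact: part_eq.
Qed.

End Main.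

Theorem lemma5p4 (R : realType) (d : measure_display) (Omega : measurableType d)
  (P : probability Omega R) (F : nat -> set (set Omega)) (k Tm : nat)
  (nu : nat -> R) (n : nat -> Omega -> nat) (ik : Omega -> R) :
  (* filtration *)
  (forall j, sub_sigma (F j)) ->
  (forall j j', (j <= j')%N -> F j `<=` F j') ->
  (k <= Tm)%N ->
  (forall l, (k <= l < Tm)%N -> 0 <= nu l) ->
  (* n^k: n^k_k = 0, measurable, independent Poisson increments indep. of F_k *)
  (forall l, measurable_fun setT (n l)) ->
  (forall w, n k w = 0%N) ->
  (forall (A : set Omega) (m : nat -> nat), F k A ->
     P (A `&` [set w | forall l, (k <= l < Tm)%N -> n l.+1 w = (n l w + m l)%N])
     = (P A * (\prod_(k <= l < Tm) pois (nu l) (m l))%:E)%E) ->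
  (* i^k_k in {-1,1}, F_k-measurable *)
  (forall w, ik w = 1 \/ ik w = -1) ->
  measurable_wrt (F k) ik ->
  let i := regime ik n in
  let G := gen_filtration (F k) i k in
  let Q := fun w => qfun nu Tm k (ik w) in
  (* Q = ess sup over stopping times theta of E_k[payoff theta] *)
  measurable_wrt (F k) Q /\
  (forall theta Y, stopping_time G k Tm theta ->
     is_cond_exp P (F k) (payoff i k Tm theta) Y ->
     {ae P, forall w, Y w <= Q w}) /\
  (forall Z : Omega -> R, measurable_wrt (F k) Z ->
     (forall theta Y, stopping_time G k Tm theta ->
        is_cond_exp P (F k) (payoff i k Tm theta) Y ->
        {ae P, forall w, Y w <= Z w}) ->
     {ae P, forall w, Q w <= Z w}).
Proof.
move=> hF _ hkT hnu hnm hn0 hind hik hikm i G Q.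
split; first exact: (@part1 R d Omega F k Tm nu ik hF hik hikm).
split.
  move=> th Y hth hY.
  exact: (@part2 R d Omega P F k Tm nu n ik hF hkT hnu hnm hn0 hind hik hikm th Y hth hY).
move=> Z hZm hZ.
exact: (@part3 R d Omega P F k Tm nu n ik hF hkT hnu hnm hn0 hind hik hikm Z hZm hZ).
Qed.
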